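(* Let $\sigma:[0,\infty)\to[0,\infty)$ be nondecreasing with $\lim_{t\to\infty}\sigma(t)=\infty$. Then $\alpha(\sigma)=\frac{1}{\gamma(\sigma)}$, where, since $\gamma(\sigma),\alpha(\sigma)\in[0,\infty]$, for the extreme values this means that $\gamma(\sigma)=\infty$ if and only if $\alpha(\sigma)=0$, and $\gamma(\sigma)=0$ if and only if $\alpha(\sigma)=\infty$.
   Context: For a measurable positive function $f$ on some $[A,\infty)$, its upper Matuszewska index is $\alpha(f):=\inf\{\alpha\in\mathbb{R}:\exists C_\alpha>0\ \forall\Lambda>1,\ \limsup_{x\to\infty}\sup_{\lambda\in[1,\Lambda]}\frac{f(\lambda x)}{\lambda^{\alpha}f(x)}\le C_\alpha\}$ (with $\inf\emptyset=\infty$); for $\sigma$ as in the claim, $\alpha(\sigma)$ means the index of the restriction of $\sigma$ to any $[A,\infty)$ with $A>0$ on which $\sigma>0$ (independent of $A$). For $\gamma>0$, say $(P_{\sigma,\gamma})$ holds if there is $K>1$ with $\limsup_{t\to\infty}\sigma(K^{\gamma}t)/\sigma(t)<K$; $\gamma(\sigma):=\sup\{\gamma>0:(P_{\sigma,\gamma})\text{ holds}\}$, and $\gamma(\sigma):=0$ if no $(P_{\sigma,\gamma})$ holds. *)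

(* Defs.v *)
From HB Require Import structures.
From mathcomp Require Import all_boot all_order all_algebra.
From mathcomp Require Import all_classical all_reals all_analysis.
Set Implicit Arguments. Unset Strict Implicit. Unset Printing Implicit Defensive.
Import Order.TTheory GRing.Theory Num.Theory.
Import numFieldNormedType.Exports.
Local Open Scope classical_set_scope.
Local Open Scope ring_scope.

Section Defs.
Variable R : realType.
Local Open Scope ereal_scope.

Definition mat_sup (f : R -> R) (a L x : R) : \bar R :=
  ereal_sup [set ((f (l * x)) / (l `^ a * f x))%:E | l in `[1%R, L]].

(* The limsup is x -> +oo (limf_esup along pinfty_nbhs), so only the values of f
   on [A, +oo) for any A matter: it is the index of any restriction of f to
   some [A, +oo). *)
Definition upper_matuszewska (f : R -> R) : \bar R :=
  ereal_inf [set a%:E | a in [set a : R | exists2 C : R, (0 < C)%R &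
     forall L : R, (1 < L)%R ->
       limf_esup (mat_sup f a L) (pinfty_nbhs R) <= C%:E]].

Definition P_prop (sigma : R -> R) (g : R) : Prop :=
  exists2 K : R, (1 < K)%R &
    limf_esup (fun t => (sigma (K `^ g * t) / sigma t)%:E) (pinfty_nbhs R) < K%:E.

Definition gamma_index (sigma : R -> R) : \bar R :=
  if `[< exists g : R, (0 < g)%R /\ P_prop sigma g >]
  then ereal_sup [set g%:E | g in [set g : R | (0 < g)%R /\ P_prop sigma g]]
  else 0.

Definition einv (x : \bar R) : \bar R :=
  match x with
  | EFin r => if r == 0%R then +oo else (r^-1)%:E
  | +oo => 0
  | -oo => 0
  end.
End Defs.

(* Main.v *)
Require Import Defs.
From HB Require Import structures.
From mathcomp Require Import all_boot all_order all_algebra.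
From mathcomp Require Import all_classical all_reals all_analysis.
From mathcomp Require Import lra ring.
Import Order.TTheory GRing.Theory Num.Theory.
Import numFieldNormedType.Exports.
Local Open Scope classical_set_scope.
Local Open Scope ring_scope.

Section Helpers.
Variable R : realType.
Implicit Types (f : R -> \bar R).

Lemma esup_lt f (c : \bar R) : (limf_esup f (pinfty_nbhs R) < c)%E ->
  exists M : R, forall x, M < x -> (f x < c)%E.
Proof.
rewrite limf_esupE => /ereal_inf_ltP[y [V FV <-{y}] Vc].
case: FV => M [Mr HM]; exists M => x /HM Vx.
apply: le_lt_trans Vc; apply: ereal_sup_ubound; by exists x.
Qed.

Lemma esup_le f (c : \bar R) (M : R) : (forall x, M < x -> (f x <= c)%E) ->
  (limf_esup f (pinfty_nbhs R) <= c)%E.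
Proof.
move=> H; rewrite limf_esupE; apply: ge_ereal_inf.
exists (ereal_sup (f @` [set x | M < x])).
  exists [set x | M < x] => //; exists M; split => //; exact: num_real.
by apply/ereal_supP => y [x /H Hx <-].
Qed.

Lemma powE (x a : R) : 0 < x -> x `^ a = expR (a * ln x).
Proof. by move=> x0; rewrite /powR gt_eqF. Qed.


Variable sigma : R -> R.
Hypothesis sigma_ge0 : forall t : R, 0 <= t -> 0 <= sigma t.
Hypothesis sigma_nd : forall s t : R, 0 <= s -> s <= t -> sigma s <= sigma t.
Hypothesis sigma_oo : sigma t @[t --> +oo] --> +oo.

Lemma sigma_pos : exists M0 : R, forall x, M0 < x -> 0 < sigma x.
Proof.
have := proj1 (cvgryPgt _) sigma_oo 0.
by move=> [M0 [_ HM]]; exists M0 => x /HM.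
Qed.

Definition admissible (a : R) := exists2 C : R, 0 < C &
  forall L : R, 1 < L -> (limf_esup (mat_sup sigma a L) (pinfty_nbhs R) <= C%:E)%E.

Lemma L1_in (L : R) : 1 <= L -> L \in `[1, L].
Proof. by move=> HL; rewrite in_itv /= HL lexx. Qed.

Lemma admissible_ge0 a : admissible a -> 0 <= a.
Proof.
move=> [C C0 HC]; rewrite leNgt; apply/negP => a0.
have na0 : 0 < - a by rewrite oppr_gt0.
set u := ln (C + 1) / (- a).
have u0 : 0 < u by rewrite divr_gt0 // ln_gt0 // ltrDr.
set L := expR u.
have L1 : 1 < L by rewrite expR_gt1.
have /esup_lt [M HM] : (limf_esup (mat_sup sigma a L) (pinfty_nbhs R) < (C + 1)%:E)%E.
  by apply: le_lt_trans (HC L L1) _; rewrite lte_fin ltrDl.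
have [M0 HM0] := sigma_pos.
set x := `|M| + `|M0| + 1.
have xM : M < x by have := ler_norm M; have := normr_ge0 M0; rewrite /x; lra.
have xM0 : M0 < x by have := ler_norm M0; have := normr_ge0 M; rewrite /x; lra.
have x0 : 0 < x by have := normr_ge0 M0; have := normr_ge0 M; rewrite /x; lra.
have sx := HM0 _ xM0.
have Hle : sigma x <= sigma (L * x).
  by apply: sigma_nd; [exact: ltW | rewrite ler_peMl // ltW].
have La : L `^ a = (C + 1)^-1.
  rewrite powE ?expR_gt0 // /L expRK /u.
  have -> : a * (ln (C + 1) / - a) = - ln (C + 1).
    by field; rewrite lt_eqF.
  by rewrite -lnV ?lnK ?posrE ?invr_gt0 ?addr_gt0.
have := HM _ xM; apply/negP; rewrite -leNgt.
apply: le_trans (ereal_sup_ubound _); last first.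
  exists L; first exact/L1_in/ltW.
  reflexivity.
rewrite lee_fin La.
have -> : sigma (L * x) / ((C + 1)^-1 * sigma x) = (C + 1) * (sigma (L * x) / sigma x).
  by field; apply/andP; split; rewrite gt_eqF // addr_gt0.
rewrite -[X in X <= _]mulr1 ler_pM2l ?addr_gt0 // ler_pdivlMr // mul1r //.
Qed.

Lemma gtT (M M0 : R) : exists T, [/\ 0 < T, M < T & M0 < T].
Proof.
exists (`|M| + `|M0| + 1); split.
- by have := normr_ge0 M0; have := normr_ge0 M; lra.
- by have := ler_norm M; have := normr_ge0 M0; lra.
- by have := ler_norm M0; have := normr_ge0 M; lra.
Qed.

Lemma admissible_P a g : admissible a -> 0 < g -> g * a < 1 -> P_prop sigma g.
Proof.
move=> [C C0 HC] g0 ga1.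
set b := 1 - g * a.
have b0 : 0 < b by rewrite /b subr_gt0.
set u := ln (C + 2) / b.
have u0 : 0 < u by rewrite divr_gt0 // ln_gt0 //; lra.
set K := expR u.
have K1 : 1 < K by rewrite expR_gt1.
exists K => //.
set L := K `^ g.
have LE : L = expR (g * u) by rewrite /L powE ?expR_gt0 // expRK.
have L1 : 1 < L by rewrite LE expR_gt1 mulr_gt0.
have /esup_lt [M HM] : (limf_esup (mat_sup sigma a L) (pinfty_nbhs R) < (C + 1)%:E)%E.
  by apply: le_lt_trans (HC L L1) _; rewrite lte_fin ltrDl.
have [M0 HM0] := sigma_pos.
have [T [T0 TM TM0]] := gtT M M0.
have LaE : L `^ a = expR (a * (g * u)) by rewrite powE ?LE ?expR_gt0 // expRK.
have Ka : (C + 1) * L `^ a < K.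
  have -> : K = expR (a * (g * u)) * (C + 2).
    rewrite /K -[C + 2]lnK ?posrE; last lra.
    rewrite -expRD; congr expR; rewrite /u /b; field; by rewrite gt_eqF.
  by rewrite LaE mulrC ltr_pM2l ?expR_gt0 //; lra.
apply: (@le_lt_trans _ _ ((C + 1) * L `^ a)%:E); last by rewrite lte_fin.
apply: (@esup_le _ _ T) => x xT.
have xM : M < x by apply: lt_trans TM xT.
have xM0 : M0 < x by apply: lt_trans TM0 xT.
have sx := HM0 _ xM0.
have Lin : L \in `[1, L] by exact/L1_in/ltW.
have Hub : ((sigma (L * x) / (L `^ a * sigma x))%:E <= mat_sup sigma a L x)%E.
  by apply: ereal_sup_ubound; exists L.
have := le_lt_trans Hub (HM _ xM).
rewrite !lte_fin lee_fin => H.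
have La0 : 0 < L `^ a by rewrite powR_gt0 // (lt_trans ltr01).
rewrite ler_pdivrMr //.
move: H; rewrite ltr_pdivrMr ?mulr_gt0 // => H.
move: H; rewrite mulrA; exact: ltW.
Qed.

Lemma P_admissible g : 0 < g -> P_prop sigma g -> exists a, admissible a /\ a * g < 1.
Proof.
move=> g0 [K K1 HK].
have [q [q1 qK lq]] : exists q : R, [/\ 1 <= q, q < K &
   (limf_esup (fun t => (sigma (K `^ g * t) / sigma t)%:E) (pinfty_nbhs R) < q%:E)%E].
  move: HK; case: (limf_esup _ _) => [r||] Hr.
  - rewrite lte_fin in Hr.
    have [r1|r1] := ltP r 1.
      by exists 1; split => //; rewrite lte_fin.
    by exists ((r + K) / 2); split; rewrite ?lte_fin; lra.
  - by [].
  - by exists 1; split => //; rewrite ltNyr.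
have /esup_lt [M1 HM1] := lq.
have [M0 HM0] := sigma_pos.
have [T [T0 TM1 TM0]] := gtT M1 M0.
set N := K `^ g.
have K0 : 0 < K by apply: lt_trans K1.
have NE : N = expR (g * ln K) by rewrite /N powE.
have lnK0 : 0 < ln K by rewrite ln_gt0.
have N1 : 1 < N by rewrite NE expR_gt1 mulr_gt0.
have N0 : 0 < N by apply: lt_trans N1.
have lnNE : ln N = g * ln K by rewrite NE expRK.
have lnN0 : 0 < ln N by rewrite lnNE mulr_gt0.
have q0 : 0 < q by apply: lt_le_trans q1.
have HT : forall x, T <= x -> 0 < sigma x /\ sigma (N * x) <= q * sigma x.
  move=> x xT.
  have xM1 : M1 < x by apply: lt_le_trans TM1 xT.
  have xM0 : M0 < x by apply: lt_le_trans TM0 xT.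
  have sx := HM0 _ xM0.
  split => //.
  have := HM1 _ xM1; rewrite lte_fin ltr_pdivrMr // => H; exact: ltW.
set a := ln q / ln N.
have a0 : 0 <= a by rewrite /a divr_ge0 // ?ln_ge0 // ltW.
have Na : N `^ a = q.
  rewrite powE // /a mulfVK ?lnK ?posrE //; by rewrite gt_eqF.
exists a; split; last first.
  rewrite /a lnNE.
  have -> : ln q / (g * ln K) * g = ln q / ln K by field; rewrite !gt_eqF.
  rewrite ltr_pdivrMr // mul1r ltr_ln ?posrE //.
have pow_ge1 : forall l, 1 <= l -> 1 <= l `^ a.
  move=> l l1; have := @ge0_ler_powR R a a0 1 l.
  rewrite powR1 !nnegrE /=; apply => //; exact: le_trans l1.
have claim : forall n : nat, forall l x, 1 <= l -> l <= N ^+ n -> T <= x ->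
    sigma (l * x) <= q * l `^ a * sigma x.
  elim=> [|n IH] l x l1 lN xT.
    have -> : l = 1 by apply/eqP; rewrite eq_le l1 andbT; move: lN; rewrite expr0.
    rewrite mul1r powR1 mulr1.
    have [sx _] := HT x xT.
    by rewrite ler_peMl // ltW.
  have [sx HNx] := HT x xT.
  have x0 : 0 < x by apply: lt_le_trans xT.
  have [lN1|lN1] := leP l N.
    apply: le_trans (_ : sigma (N * x) <= _).
      by apply: sigma_nd; rewrite ?mulr_ge0 ?ler_pM2r // ltW // (lt_le_trans ltr01).
    apply: (le_trans HNx).
    by rewrite ler_pM2r // -[X in X <= _]mulr1 ler_pM2l // pow_ge1.
  set l' := l / N.
  have l'1 : 1 <= l' by rewrite /l' ler_pdivlMr // mul1r ltW.
  have l'N : l' <= N ^+ n by rewrite /l' ler_pdivrMr // -exprSr.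
  have NxT : T <= N * x.
    apply: le_trans xT _; rewrite ler_peMl ?ltW //.
  have := IH l' (N * x) l'1 l'N NxT.
  have -> : l' * (N * x) = l * x by rewrite /l' mulrA mulfVK // gt_eqF.
  move/le_trans; apply.
  have [sNx _] := HT (N * x) NxT.
  have -> : q * l `^ a * sigma x = q * l' `^ a * (q * sigma x).
    have -> : l = l' * N by rewrite /l' mulfVK // gt_eqF.
    rewrite powRM ?Na; [ring| |exact: ltW].
    exact: le_trans l'1.
  rewrite ler_pM2l //.
  by rewrite mulr_gt0 // powR_gt0 // (lt_le_trans ltr01).
exists q => // L L1.
apply: (@esup_le _ _ T) => x xT.
apply/ereal_supP => y [l lin <-{y}].
have : l \in `[1, L] by exact: lin.
rewrite in_itv /= => /andP[l1 lL].
have [sx _] := HT x (ltW xT).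
rewrite lee_fin ler_pdivrMr; last first.
  by rewrite mulr_gt0 // powR_gt0 // (lt_le_trans ltr01).
have [n lnn] : exists n : nat, l <= N ^+ n.
  exists (Num.truncn (ln l / ln N)).+1.
  rewrite -powR_mulrn; last exact: ltW.
  rewrite powE //.
  have l0 : 0 < l by apply: lt_le_trans l1.
  apply: le_trans (_ : expR (ln l) <= _); first by rewrite lnK.
  rewrite ler_expR.
  rewrite -ler_pdivrMr //; apply: ltW; exact: truncnS_gt.
rewrite mulrA; exact: claim n l x l1 lnn (ltW xT).
Qed.

Lemma alpha_lt g : 0 < g -> P_prop sigma g ->
  (upper_matuszewska sigma < (g^-1)%:E)%E.
Proof.
move=> g0 Pg; have [a [Aa ag]] := @P_admissible g g0 Pg.
apply: (@le_lt_trans _ _ a%:E).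
  by apply: ereal_inf_lbound; exists a.
by rewrite lte_fin -div1r ltr_pdivlMr.
Qed.

Lemma alpha_ge0 : (0 <= upper_matuszewska sigma)%E.
Proof.
apply/ereal_infP => y [a Aa <-]; rewrite lee_fin; exact: admissible_ge0.
Qed.

Lemma inv_lt (g' g : R) : 0 < g' -> g' < g -> g^-1 < g'^-1.
Proof.
move=> g'0 gg; rewrite ltf_pV2 // posrE //; exact: lt_trans gg.
Qed.

Lemma main_sec :
  upper_matuszewska sigma = einv (gamma_index sigma) /\
  (gamma_index sigma = +oo%E <-> upper_matuszewska sigma = 0%E) /\
  (gamma_index sigma = 0%E <-> upper_matuszewska sigma = +oo%E).
Proof.
have aP := admissible_P.
have aG := admissible_ge0.
have aLt := alpha_lt.
have a0 := alpha_ge0.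
rewrite /gamma_index; case: asboolP => [[g0 [g0pos Pg0]] | nG]; last first.
  have -> : upper_matuszewska sigma = +oo%E.
    apply/ereal_inf_pinfty => y [a Aa <-].
    exfalso; apply: nG; exists ((a + 1)^-1).
    have := aG _ Aa => a0'.
    have a10 : 0 < a + 1 by lra.
    split; first by rewrite invr_gt0.
    apply: aP Aa _ _; first by rewrite invr_gt0.
    by rewrite mulrC ltr_pdivrMr // mul1r; lra.
  have -> : (0%E : \bar R) = (0:R)%:E by [].
  by rewrite /einv eqxx.
set S := [set g%:E | g in _].
have g0S : (g0%:E <= ereal_sup S)%E by apply: ereal_sup_ubound; exists g0.
case E: (ereal_sup S) g0S => [r| |] g0S.
- rewrite lee_fin in g0S.
  have r0 : 0 < r by apply: lt_le_trans g0S.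
  have -> : upper_matuszewska sigma = (r^-1)%:E.
    apply/eqP; rewrite eq_le; apply/andP; split.
      apply/lee_addgt0Pr => e e0.
      set g' := (r^-1 + e)^-1.
      have re0 : 0 < r^-1 + e by rewrite addr_gt0 // invr_gt0.
      have g'0 : 0 < g' by rewrite invr_gt0.
      have g'r : g' < r.
        rewrite /g' -[X in _ < X]invrK; apply: inv_lt; first by rewrite invr_gt0.
        by rewrite ltrDl.
      have : (g'%:E < ereal_sup S)%E by rewrite E lte_fin.
      move=> /ereal_sup_gt [y [g [gpos Pg] <-]]; rewrite lte_fin => g'g.
      apply: ltW; apply: (lt_le_trans (aLt _ gpos Pg)).
      rewrite -EFinD lee_fin -[X in _ <= X]invrK; apply: ltW; exact: inv_lt.
    apply/ereal_infP => y [a Aa <-]; rewrite lee_fin.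
    have a0' := aG _ Aa.
    rewrite leNgt; apply/negP => ar.
    set s := r^-1 in ar.
    have rs : r * s = 1 by rewrite /s mulfV // gt_eqF.
    have s0 : 0 < s by rewrite invr_gt0.
    have t0 : 0 < a + s by lra.
    set g := 2 / (a + s).
    have gpos : 0 < g by rewrite divr_gt0.
    have Pg : P_prop sigma g.
      apply: aP Aa gpos _.
      by rewrite /g mulrAC ltr_pdivrMr // mul1r; lra.
    have : (g%:E <= ereal_sup S)%E by apply: ereal_sup_ubound; exists g.
    rewrite E lee_fin leNgt => /negP; apply.
    rewrite /g ltr_pdivlMr //; nra.
  rewrite /einv gt_eqF //; split => //; split; split => // H.
  + by move: H => [] /eqP; rewrite invr_eq0 gt_eqF.
  + by move: H => [] /eqP; rewrite gt_eqF.
- have -> : upper_matuszewska sigma = 0%E.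
    apply/eqP; rewrite eq_le a0 andbT.
    apply/lee_addgt0Pr => e e0; rewrite add0e.
    have : ((e^-1)%:E < ereal_sup S)%E by rewrite E ltry.
    move=> /ereal_sup_gt [y [g [gpos Pg] <-]]; rewrite lte_fin => eg.
    apply: ltW; apply: (lt_le_trans (aLt _ gpos Pg)).
    rewrite lee_fin -[X in _ <= X]invrK; apply: ltW; apply: inv_lt => //.
    by rewrite invr_gt0.
  by [].
- by [].
Qed.

End Helpers.

Theorem lemma2p10 (R : realType) (sigma : R -> R)
  (sigma_ge0 : forall t : R, 0 <= t -> 0 <= sigma t)
  (sigma_nd : forall s t : R, 0 <= s -> s <= t -> sigma s <= sigma t)
  (sigma_oo : sigma t @[t --> +oo] --> +oo) :
  upper_matuszewska sigma = einv (gamma_index sigma) /\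
  (gamma_index sigma = +oo%E <-> upper_matuszewska sigma = 0%E) /\
  (gamma_index sigma = 0%E <-> upper_matuszewska sigma = +oo%E).
Proof. apply: main_sec; assumption. Qed.
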